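(* For every positive integer $N$ and all $w_1,w_2\in\mathcal{H}^1$, $\mathsf{F}_N(w_1;t)\,\mathsf{F}_N(w_2;t)=\mathsf{F}_N(w_1\,\overline{*}\,w_2;t)$ in $\mathbb{Q}(t)$.
   Context: $t$ is an indeterminate, $[n]=\{1,\dots,n\}$. An index is a tuple of positive integers. For an index $\boldsymbol{k}=(k_1,\dots,k_r)$ and $A\subset[r]$ let $\overline{S}_{r,N}(A)=\{(n_1,\dots,n_r)\in[N-1]^r: n_{i-1}\le n_i\text{ if }1<i\in[r]\setminus A,\ n_{i-1}<n_i\text{ if }1<i\in A\}$, and \[ F_N(\boldsymbol{k};t)=\sum_{A\subset[r]}(-1)^{\#A}\sum_{(n_1,\dots,n_r)\in\overline{S}_{r,N}(A)}\Bigl(\prod_{i\in A}\frac1{(N-n_i+t)^{k_i}}\Bigr)\Bigl(\prod_{i\in[r]\setminus A}\frac1{n_i^{k_i}}\Bigr). \] $\mathcal{H}=\mathbb{Q}\langle x,y\rangle$, $\mathcal{H}^1=\mathbb{Q}+y\mathcal{H}$, $e_k=yx^{k-1}$; $\mathsf{F}_N\colon\mathcal{H}^1\to\mathbb{Q}(t)$ is $\mathbb{Q}$-linear with $\mathsf{F}_N(1)=1$ and $\mathsf{F}_N(e_{k_1}\cdots e_{k_r})=F_N(\boldsymbol{k};t)$. The star-harmonic product $\overline{*}$ on $\mathcal{H}^1$ is $\mathbb{Q}$-bilinear with $w\,\overline{*}\,1=1\,\overline{*}\,w=w$ and $w_1e_{k_1}\,\overline{*}\,w_2e_{k_2}=(w_1\,\overline{*}\,w_2e_{k_2})e_{k_1}+(w_1e_{k_1}\,\overline{*}\,w_2)e_{k_2}-(w_1\,\overline{*}\,w_2)e_{k_1+k_2}$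 for words $w_1,w_2\in\mathcal{H}^1$. *)

(* Defs.v *)
From HB Require Import structures.
From mathcomp Require Import all_boot all_order all_algebra fraction.
Set Implicit Arguments. Unset Strict Implicit. Unset Printing Implicit Defensive.
Import Order.TTheory GRing.Theory Num.Theory.
Local Open Scope ring_scope.

Definition QT := {fraction {poly rat}}.
Definition tt_ : QT := FracField.tofrac (R:={poly rat}) 'X.
Definition cst (c : rat) : QT := FracField.tofrac (R:={poly rat}) c%:P.

(* An index k = (k_1,...,k_r) is a sequence of naturals (required positive);
   the word e_{k_1}...e_{k_r} of H^1 is identified with its index. *)
Definition index := seq nat.

(* \overline{S}_{r,N}(A), with n_i in [N-1] encoded as n i : 'I_N, n i > 0;
   0-based positions: i and j = i+1 consecutive. *)
Definition Sbar (N r : nat) (A : {set 'I_r}) (n : {ffun 'I_r -> 'I_N}) : bool :=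
  [forall i : 'I_r, 0 < (n i : nat)]%N &&
  [forall i : 'I_r, forall j : 'I_r,
     (j == i.+1 :> nat) ==> (if j \in A then (n i < n j)%N else (n i <= n j)%N)].

Definition FN (N : nat) (k : index) : QT :=
  let r := size k in
  \sum_(A : {set 'I_r})
    (-1) ^+ #|A| *
    \sum_(n : {ffun 'I_r -> 'I_N} | Sbar A n)
       ((\prod_(i in A) (((N - n i)%:R + tt_) ^+ nth 0%N k i)^-1) *
        (\prod_(i : 'I_r | i \notin A) (((n i : nat)%:R : QT) ^+ nth 0%N k i)^-1)).

(* Elements of H^1 as finite formal Q-linear combinations of words (indices). *)
Definition H1 := seq (rat * index).

Definition admissible (w : H1) : bool :=
  all (fun p => all (fun k => 0 < k)%N p.2) w.

Definition FNlin (N : nat) (w : H1) : QT :=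
  \sum_(p <- w) cst p.1 * FN N p.2.

(* Star-harmonic product of words, computed on reversed words
   (so that the last letter is the head). *)
Fixpoint shr (u : index) : index -> H1 :=
  match u with
  | [::] => fun v => [:: (1, v)]
  | a :: u' =>
      fix shr_v (v : index) : H1 :=
        match v with
        | [::] => [:: (1, a :: u')]
        | b :: v' =>
            map (fun p => (p.1, a :: p.2)) (shr u' (b :: v')) ++
            map (fun p => (p.1, b :: p.2)) (shr_v v') ++
            map (fun p => (- p.1, (a + b)%N :: p.2)) (shr u' v')
        end
  end.

Definition starw (w1 w2 : index) : H1 :=
  map (fun p => (p.1, rev p.2)) (shr (rev w1) (rev w2)).

Definition star (w1 w2 : H1) : H1 :=
  flatten (map (fun p => flatten (map (fun q =>
     map (fun c => (p.1 * q.1 * c.1, c.2)) (starw p.2 q.2)) w2)) w1).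

(* Main.v *)
Require Import Defs.
From HB Require Import structures.
From mathcomp Require Import all_boot all_order all_algebra fraction.
From mathcomp Require Import ring zify.
Import GRing.Theory.
Local Open Scope ring_scope.

Section Main.
Variable N : nat.

Definition ff (j a : nat) : QT := ((j%:R : QT) ^+ a)^-1.
Definition gg (j a : nat) : QT := - ((((N - j)%:R : QT) + tt_) ^+ a)^-1.

Fixpoint S (k : seq nat) (M : nat) : QT :=
  match k with
  | [::] => 1
  | a :: k' => \sum_(1 <= j < M.+1) (ff j a * S k' j + gg j a * S k' j.-1)
  end.

Lemma S0 a k : S (a :: k) 0 = 0.
Proof. by rewrite /= big_geq. Qed.

Lemma SS a k M : S (a :: k) M.+1 =
  S (a :: k) M + ff M.+1 a * S k M.+1 + gg M.+1 a * S k M.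
Proof. by rewrite /= big_nat_recr //= addrA. Qed.

Arguments S : simpl never.

Definition SL (w : H1) M : QT := \sum_(p <- w) cst p.1 * S p.2 M.

Lemma cst1 : cst 1 = 1.
Proof. by rewrite /cst rmorph1. Qed.
Lemma cstN c : cst (- c) = - cst c.
Proof. by rewrite /cst polyCN rmorphN. Qed.
Lemma cstM c d : cst (c * d) = cst c * cst d.
Proof. by rewrite /cst polyCM rmorphM. Qed.

Lemma SL_cat w1 w2 M : SL (w1 ++ w2) M = SL w1 M + SL w2 M.
Proof. by rewrite /SL big_cat. Qed.

Lemma SL_cons_map a w M :
  SL (map (fun p => (p.1, a :: p.2)) w) M.+1 =
  SL (map (fun p => (p.1, a :: p.2)) w) M + ff M.+1 a * SL w M.+1 + gg M.+1 a * SL w M.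
Proof.
rewrite /SL !big_map !mulr_sumr -!big_split; apply: eq_bigr => p _.
rewrite SS /=; ring.
Qed.

Lemma SL_cons_mapN a w M :
  SL (map (fun p => (- p.1, a :: p.2)) w) M.+1 =
  SL (map (fun p => (- p.1, a :: p.2)) w) M - ff M.+1 a * SL w M.+1 - gg M.+1 a * SL w M.
Proof.
rewrite /SL !big_map !mulr_sumr -!sumrN -!big_split; apply: eq_bigr => p _.
rewrite SS cstN /=; ring.
Qed.

Lemma SL_cons_map0 a w :
  SL (map (fun p => (p.1, a :: p.2)) w) 0 = 0.
Proof. by rewrite /SL big_map big1 // => p _; rewrite S0 mulr0. Qed.
Lemma SL_cons_mapN0 a w :
  SL (map (fun p => (- p.1, a :: p.2)) w) 0 = 0.
Proof. by rewrite /SL big_map big1 // => p _; rewrite S0 mulr0. Qed.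

Lemma ffD j a b : ff j (a + b) = ff j a * ff j b.
Proof. by rewrite /ff exprD invfM. Qed.
Lemma ggD j a b : gg j (a + b) = - (gg j a * gg j b).
Proof. by rewrite /gg exprD invfM mulrNN. Qed.

Lemma shr_nil_l v : shr [::] v = [:: (1, v)].
Proof. by []. Qed.
Lemma shr_nil_r a u : shr (a :: u) [::] = [:: (1, a :: u)].
Proof. by []. Qed.
Lemma shr_cons a u b v : shr (a :: u) (b :: v) =
  map (fun p => (p.1, a :: p.2)) (shr u (b :: v)) ++
  map (fun p => (p.1, b :: p.2)) (shr (a :: u) v) ++
  map (fun p => (- p.1, (a + b)%N :: p.2)) (shr u v).
Proof. by []. Qed.

Lemma S_shr M : forall u v, S u M * S v M = SL (shr u v) M.
Proof.
elim: M => [|M IHM] u v.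
  case: u => [|a u]; first by rewrite shr_nil_l /SL big_cons big_nil cst1 /=; ring.
  case: v => [|b v]; first by rewrite shr_nil_r /SL big_cons big_nil cst1 /=; ring.
  by rewrite shr_cons !SL_cat SL_cons_map0 SL_cons_map0 SL_cons_mapN0 !S0; ring.
elim: u v => [|a u IHu] v.
  by rewrite shr_nil_l /SL big_cons big_nil cst1 /=; ring.
elim: v => [|b v IHv].
  by rewrite shr_nil_r /SL big_cons big_nil cst1 /=; ring.
have E := IHM (a :: u) (b :: v); rewrite shr_cons !SL_cat in E.
rewrite shr_cons !SL_cat SL_cons_map SL_cons_map SL_cons_mapN.
have -> : forall x1 x2 x3 y1 y2 y3 z1 z2 z3 : QT,
  x1 + x2 + x3 + (y1 + y2 + y3 + (z1 - z2 - z3)) =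
  (x1 + (y1 + z1)) + x2 + x3 + y2 + y3 - z2 - z3 by move=> *; ring.
rewrite -E -!IHu -IHv -!IHM.
rewrite ffD ggD !SS; ring.
Qed.

Definition last_le r (n : {ffun 'I_r -> 'I_N}) M :=
  [forall i : 'I_r, (i.+1 == r)%N ==> (n i <= M)%N].
Arguments last_le {r}.
Definition W r (kf : nat -> nat) (A : {set 'I_r}) (n : {ffun 'I_r -> 'I_N}) : QT :=
  \prod_(i < r) (if i \in A then gg (n i) (kf i) else ff (n i) (kf i)).
Arguments W {r}.
Definition G r kf M : QT :=
  \sum_(A : {set 'I_r}) \sum_(n : {ffun 'I_r -> 'I_N} | Sbar A n && last_le n M) W kf A n.

Definition hA r (p : bool * {set 'I_r}) : {set 'I_r.+1} :=
  [set i | if unlift ord_max i is Some j then j \in p.2 else p.1].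
Arguments hA {r}.
Definition hn r (q : 'I_N * {ffun 'I_r -> 'I_N}) : {ffun 'I_r.+1 -> 'I_N} :=
  [ffun i => if unlift ord_max i is Some j then q.2 j else q.1].
Arguments hn {r}.

Lemma hA_lift r b (A : {set 'I_r}) j : (lift ord_max j \in hA (b, A)) = (j \in A).
Proof. by rewrite inE liftK. Qed.
Lemma hA_max r b (A : {set 'I_r}) : (ord_max \in hA (b, A)) = b.
Proof. by rewrite inE unlift_none. Qed.
Lemma hn_lift r x (n : {ffun 'I_r -> 'I_N}) j : hn (x, n) (lift ord_max j) = n j.
Proof. by rewrite ffunE liftK. Qed.
Lemma hn_max r x (n : {ffun 'I_r -> 'I_N}) : hn (x, n) ord_max = x.
Proof. by rewrite ffunE unlift_none. Qed.

Lemma hA_bij r : bijective (@hA r).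
Proof.
exists (fun A : {set 'I_r.+1} => (ord_max \in A, [set j : 'I_r | lift ord_max j \in A])).
  by case=> b A; rewrite hA_max; congr pair; apply/setP => j; rewrite inE hA_lift.
move=> A; apply/setP => i; rewrite inE.
by case: unliftP => [j ->|->]; rewrite ?liftK ?unlift_none ?inE.
Qed.

Lemma hn_bij r : bijective (@hn r).
Proof.
exists (fun n : {ffun 'I_r.+1 -> 'I_N} => (n ord_max, [ffun j : 'I_r => n (lift ord_max j)])).
  by case=> x n; rewrite hn_max; congr pair; apply/ffunP => j; rewrite ffunE hn_lift.
move=> n; apply/ffunP => i; rewrite ffunE.
by case: unliftP => [j ->|->]; rewrite ?liftK ?unlift_none ?ffunE.
Qed.

Lemma C_dec r b (A : {set 'I_r}) x (n : {ffun 'I_r -> 'I_N}) M :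
  (Sbar (hA (b, A)) (hn (x, n)) && last_le (hn (x, n)) M) =
  [&& (0 < x)%N, (x <= M)%N & Sbar A n && last_le n (if b then x.-1 else x)].
Proof.
apply/idP/idP.
  case/andP=> /andP[/forallP Hpos /forallP Hch] /forallP Hl.
  apply/and4P; split.
  - by have := Hpos ord_max; rewrite hn_max.
  - by have := Hl ord_max; rewrite /= eqxx hn_max.
  - apply/andP; split.
    + by apply/forallP => i; have := Hpos (lift ord_max i); rewrite hn_lift.
    + apply/forallP => i; apply/forallP => j; apply/implyP => Hj.
      have /forallP/(_ (lift ord_max j)) := Hch (lift ord_max i).
      by rewrite !lift_max hA_lift !hn_lift Hj.
  - apply/forallP => i; apply/implyP => /eqP Hi.
    have /forallP/(_ ord_max) := Hch (lift ord_max i).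
    rewrite lift_max hA_max hn_lift hn_max /= Hi eqxx /=.
    have := Hpos ord_max; rewrite hn_max.
    by case: (b) => // H0 H; lia.
case/and4P=> Hx HxM /andP[/forallP Hpos /forallP Hch] /forallP Hl.
apply/andP; split; first (apply/andP; split).
- apply/forallP => i; case: (unliftP ord_max i) => [i' ->|->].
    by rewrite hn_lift.
  by rewrite hn_max.
- apply/forallP => i; apply/forallP => j; apply/implyP => /eqP Hji.
  case: (unliftP ord_max i) Hji => [i' ->|->] Hji; last first.
    by have := ltn_ord j; rewrite Hji /= ltnn.
  case: (unliftP ord_max j) Hji => [j' ->|->] Hji.
    have /forallP/(_ j') := Hch i'.
    by rewrite !lift_max hA_lift !hn_lift in Hji *; rewrite Hji eqxx.
  rewrite hA_max hn_lift hn_max.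
  rewrite lift_max /= in Hji.
  have := Hl i'; rewrite -Hji eqxx /=.
  by case: (b) => // H; lia.
- apply/forallP => i; apply/implyP => /eqP Hi.
  case: (unliftP ord_max i) Hi => [i' ->|->] Hi.
    by rewrite lift_max in Hi; have := ltn_ord i'; rewrite -[(i' < r)%N]ltnS Hi ltnn.
  by rewrite hn_max.
Qed.


Lemma W_dec r kf b (A : {set 'I_r}) x (n : {ffun 'I_r -> 'I_N}) :
  W kf (hA (b, A)) (hn (x, n)) = W kf A n * (if b then gg x (kf r) else ff x (kf r)).
Proof.
rewrite /W big_ord_recr /=; congr (_ * _); last by rewrite hA_max hn_max.
apply: eq_bigr => i _.
have -> : widen_ord (leqnSn r) i = lift ord_max i by apply: val_inj; exact: (esym (lift_max i)).
by rewrite hA_lift hn_lift.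
Qed.

Lemma sum_pair (I J : finType) (F : I * J -> QT) :
  \sum_(p : I * J) F p = \sum_(i : I) \sum_(j : J) F (i, j).
Proof. by rewrite pair_bigA; apply: eq_bigr => -[]. Qed.

Lemma sum_conv M (H : nat -> QT) : (M < N)%N ->
  \sum_(x : 'I_N) (if (0 < x <= M)%N then H x else 0) = \sum_(1 <= j < M.+1) H j.
Proof.
move=> MN.
rewrite -(big_mkord xpredT (fun x => if (0 < x <= M)%N then H x else 0)).
rewrite big_ltn; last by apply: leq_ltn_trans MN.
rewrite /= add0r (big_nat_widen _ _ _ _ _ MN).
rewrite [RHS]big_mkcond; apply: eq_big_nat => i /andP[i1 _]; by rewrite i1.
Qed.

Lemma G_rec r kf M : (M < N)%N ->
  G r.+1 kf M = \sum_(1 <= j < M.+1)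
      (ff j (kf r) * G r kf j + gg j (kf r) * G r kf j.-1).
Proof.
move=> MN; rewrite -sum_conv //.
rewrite /G (reindex (@hA r)) /=; last exact: onW_bij (hA_bij r).
rewrite sum_pair big_bool /=.
have E : forall b (A : {set 'I_r}),
  \sum_(n | Sbar (hA (b, A)) n && last_le n M) W kf (hA (b, A)) n =
  \sum_(x : 'I_N) (if (0 < x <= M)%N then
     (if b then gg x (kf r) else ff x (kf r)) *
     \sum_(n | Sbar A n && last_le n (if b then x.-1 else x)) W kf A n else 0).
  move=> b A.
  rewrite (reindex (@hn r)) /=; last exact: onW_bij (hn_bij r).
  rewrite big_mkcond sum_pair; apply: eq_bigr => x _.
  case H: (0 < x <= M)%N.
    rewrite mulr_sumr [RHS]big_mkcond; apply: eq_bigr => n _.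
    rewrite C_dec andbA H /= W_dec; case: ifP => // _; exact: mulrC.
  by apply: big1 => n _; rewrite C_dec andbA H.
under eq_bigr do rewrite E.
under [X in _ + X]eq_bigr do rewrite E.
rewrite exchange_big [X in _ + X]exchange_big /= -big_split /=.
apply: eq_bigr => x _; case: ifP => _; last by rewrite !big1 ?addr0.
by rewrite -!mulr_sumr addrC.
Qed.


Lemma G_ext r kf kf' M : (forall i, (i < r)%N -> kf i = kf' i) -> G r kf M = G r kf' M.
Proof.
move=> H; apply: eq_bigr => A _; apply: eq_bigr => n _; apply: eq_bigr => i _.
by rewrite H.
Qed.

Lemma G0 kf M : G 0 kf M = 1.
Proof.
rewrite /G (big_pred1 set0); last first.
  by move=> A; apply/esym/eqP/setP => -[].
rewrite (big_pred1 (@ffun0 _ (fun _ => ordinal N) (card_ord 0))); last first.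
  move=> n /=.
  have -> : (n == ffun0 (card_ord 0)) = true by apply/eqP/ffunP => -[].
  by apply/andP; split; [apply/andP; split|]; apply/forallP => -[].
by rewrite /W big_ord0.
Qed.

Lemma S_nil M : S [::] M = 1. Proof. by []. Qed.
Lemma S_cons a k M : S (a :: k) M =
  \sum_(1 <= j < M.+1) (ff j a * S k j + gg j a * S k j.-1).
Proof. by []. Qed.

Lemma S_G k M : (M < N)%N -> S (rev k) M = G (size k) (nth 0%N k) M.
Proof.
elim/last_ind: k M => [|k a IH] M MN; first by rewrite S_nil G0.
rewrite rev_rcons size_rcons G_rec // S_cons nth_rcons ltnn eqxx.
apply: eq_big_nat => j /andP[j1 jM].
have jN : (j < N)%N by apply: leq_ltn_trans MN.
have jN' : (j.-1 < N)%N by apply: leq_ltn_trans (leq_pred j) jN.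
rewrite !IH //; congr (_ * _ + _ * _); apply: G_ext => i iK; by rewrite nth_rcons iK.
Qed.

Lemma FN_G k : (0 < N)%N -> FN N k = G (size k) (nth 0%N k) N.-1.
Proof.
move=> N0; rewrite /FN /G /=; apply: eq_bigr => A _.
rewrite mulr_sumr; apply: eq_big => n.
  apply/esym; case: (Sbar A n) => //=; apply/forallP => i; apply/implyP => _.
  have := ltn_ord (n i); lia.
move=> _; rewrite /W [RHS](bigID (fun i => i \in A)) /=.
rewrite (eq_bigr (fun i => - ((((N - n i)%:R : QT) + tt_) ^+ nth 0%N k i)^-1)
   (F1 := fun i => if i \in A then gg (n i) (nth 0%N k i) else ff (n i) (nth 0%N k i))
   (P := fun i => i \in A)); last first.
  by move=> i ->.
rewrite (eq_bigr (fun i => (((n i)%:R : QT) ^+ nth 0%N k i)^-1)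
   (F1 := fun i => if i \in A then gg (n i) (nth 0%N k i) else ff (n i) (nth 0%N k i))
   (P := fun i => i \notin A)); last first.
  by move=> i /negbTE ->.
by rewrite prodrN mulrA.
Qed.

End Main.

Lemma FN_S N k : (0 < N)%N -> FN N k = S N (rev k) N.-1.
Proof.
move=> N0; rewrite FN_G // S_G //.
by case: N N0.
Qed.

Lemma starw_FN N u v : (0 < N)%N ->
  \sum_(c <- starw u v) cst c.1 * FN N c.2 = FN N u * FN N v.
Proof.
move=> N0; rewrite /starw big_map !FN_S // S_shr /SL.
by apply: eq_bigr => c _; rewrite /= FN_S // revK.
Qed.

Theorem mainTheorem14 (N : nat) (w1 w2 : H1) :
  (0 < N)%N -> admissible w1 -> admissible w2 ->
  FNlin N w1 * FNlin N w2 = FNlin N (star w1 w2).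
Proof.
move=> N0 _ _.
rewrite /FNlin /star big_flatten big_map big_distrl; apply: eq_bigr => p _.
rewrite big_flatten big_map big_distrr; apply: eq_bigr => q _.
rewrite big_map /=.
under eq_bigr do rewrite !cstM -!mulrA.
by rewrite -mulr_sumr -mulr_sumr starw_FN //; ring.
Qed.
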